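(* Fix an outer iteration $k$ of SREDA and the inner procedure described in the context. Let $g(y)=-f(x_{k+1},y)$, $\tilde y_k^*=\arg\min_yg(y)$ and $\hat u_{k,t}=-\tilde u_{k,t}$. Then $$\sum_{t=0}^m\mathbb{E}\|\nabla g(\tilde y_{k,t})\|^2\le\frac2\lambda\mathbb{E}\big[g(\tilde y_{k,0})-g(\tilde y_k^* )\big]+\sum_{t=0}^m\mathbb{E}\|\nabla g(\tilde y_{k,t})-\hat u_{k,t}\|^2-(1-\ell\lambda)\sum_{t=0}^m\mathbb{E}\|\hat u_{k,t}\|^2.$$
   Context: Problem: $f(x,y)=\mathbb{E}[F(x,y;\xi)]$ on $\mathbb{R}^{d_1}\times\mathbb{R}^{d_2}$ with (A2) $\mathbb{E}\|\nabla F(x,y;\xi)-\nabla F(x',y';\xi)\|^2\le\ell^2(\|x-x'\|^2+\|y-y'\|^2)$, (A3) $F(x,\cdot;\xi)$ concave for each $\xi,x$, (A4) $f(x,\cdot)$ $\mu$-strongly concave, and also $\max_yf(\cdot,y)$ bounded below and $\mathbb{E}\|\nabla F-\nabla f\|^2\le\sigma^2$. $G_x=\nabla_xF$, $G_y=\nabla_yF$; samples are i.i.d. copies of $\xi$ independent of everything else. Inner procedure at outer iteration $k$ (step size $\lambda>0$, batch size $S_2$, integer $m$): given $x_k,y_k$, estimates $v_k,u_k$ and $x_{k+1}$, set $\tilde x_{k,-1}=x_k,\tilde y_{k,-1}=y_k,\tilde v_{k,-1}=v_k,\tilde u_{k,-1}=u_k,\tilde x_{k,0}=x_{k+1},\tilde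 y_{k,0}=y_k$; for $t=0,\dots,m+1$ draw $S_2$ fresh samples $\xi_{t,i}$ and set $\tilde v_{k,t}=\tilde v_{k,t-1}+\frac1{S_2}\sum_i[G_x(\tilde x_{k,t},\tilde y_{k,t};\xi_{t,i})-G_x(\tilde x_{k,t-1},\tilde y_{k,t-1};\xi_{t,i})]$, $\tilde u_{k,t}=\tilde u_{k,t-1}+\frac1{S_2}\sum_i[G_y(\tilde x_{k,t},\tilde y_{k,t};\xi_{t,i})-G_y(\tilde x_{k,t-1},\tilde y_{k,t-1};\xi_{t,i})]$, $\tilde x_{k,t+1}=\tilde x_{k,t}$, $\tilde y_{k,t+1}=\tilde y_{k,t}+\lambda\tilde u_{k,t}$. *)

(* Defs.v *)
From HB Require Import structures.
From mathcomp Require Import all_boot all_order all_algebra.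
From mathcomp Require Import all_classical all_reals all_analysis.
Set Implicit Arguments. Unset Strict Implicit. Unset Printing Implicit Defensive.
Import Order.TTheory GRing.Theory Num.Theory.
Import numFieldNormedType.Exports.
Local Open Scope classical_set_scope.
Local Open Scope ring_scope.

Definition dotv (R : realType) (n : nat) (u v : 'rV[R]_n) : R :=
  \sum_(i < n) u 0 i * v 0 i.
Definition sqn (R : realType) (n : nat) (u : 'rV[R]_n) : R := dotv u u.

Definition is_grad2 (R : realType) (d1 d2 : nat)
  (h : 'rV[R]_d1 * 'rV[R]_d2 -> R) (z : 'rV[R]_d1 * 'rV[R]_d2)
  (gx : 'rV[R]_d1) (gy : 'rV[R]_d2) : Prop :=
  differentiable h z /\
  forall p : 'rV[R]_d1 * 'rV[R]_d2, ('d h z) p = dotv gx p.1 + dotv gy p.2.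

Definition concave_fun (R : realType) (n : nat) (h : 'rV[R]_n -> R) : Prop :=
  forall (y y' : 'rV[R]_n) (a : R), 0 <= a <= 1 ->
    (1 - a) * h y + a * h y' <= h ((1 - a) *: y + a *: y').
Definition strongly_concave (R : realType) (n : nat) (mu : R)
  (h : 'rV[R]_n -> R) : Prop :=
  forall (y y' : 'rV[R]_n) (a : R), 0 <= a <= 1 ->
    (1 - a) * h y + a * h y' + mu / 2 * a * (1 - a) * sqn (y - y')
      <= h ((1 - a) *: y + a *: y').

Definition Ex (R : realType) (d : measure_display) (T : measurableType d)
  (P : probability T R) (X : T -> R) : \bar R := (\int[P]_w (X w)%:E)%E.

(* Inner procedure of SREDA at a fixed outer iteration k, for a fixed
   realisation of the samples.  inner_state n = (x~_{k,n}, y~_{k,n}, v~_{k,n}, u~_{k,n}).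
   xk, yk, vk, uk, xk1 are x_k, y_k, v_k, u_k, x_{k+1}; xi t i is the sample xi_{t,i}. *)
Section Inner.
Variables (R : realType) (d1 d2 : nat) (Xi : Type).
Variables (Gx : 'rV[R]_d1 -> 'rV[R]_d2 -> Xi -> 'rV[R]_d1)
          (Gy : 'rV[R]_d1 -> 'rV[R]_d2 -> Xi -> 'rV[R]_d2).
Variables (lam : R) (S2 : nat) (xi : nat -> nat -> Xi).
Variables (xk : 'rV[R]_d1) (yk : 'rV[R]_d2) (vk : 'rV[R]_d1) (uk : 'rV[R]_d2)
          (xk1 : 'rV[R]_d1).

Definition corr_x (t : nat) x' y' x y : 'rV[R]_d1 :=
  (S2%:R)^-1 *: \sum_(i < S2) (Gx x' y' (xi t i) - Gx x y (xi t i)).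
Definition corr_y (t : nat) x' y' x y : 'rV[R]_d2 :=
  (S2%:R)^-1 *: \sum_(i < S2) (Gy x' y' (xi t i) - Gy x y (xi t i)).

Fixpoint inner_state (n : nat) :
    'rV[R]_d1 * 'rV[R]_d2 * 'rV[R]_d1 * 'rV[R]_d2 :=
  match n with
  | 0 => (xk1, yk, vk + corr_x 0 xk1 yk xk yk, uk + corr_y 0 xk1 yk xk yk)
  | n'.+1 =>
      let: (x, y, v, u) := inner_state n' in
      let x' := x in
      let y' := y + lam *: u in
      (x', y', v + corr_x n x' y' x y, u + corr_y n x' y' x y)
  end.

Definition ytil (n : nat) : 'rV[R]_d2 := (inner_state n).1.1.2.
Definition util (n : nat) : 'rV[R]_d2 := (inner_state n).2.
End Inner.

Definition vec_events (R : realType) (d : measure_display) (T : measurableType d)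
  (n : nat) (Z : T -> 'rV[R]_n) : set (set T) :=
  [set A | exists (i : 'I_n) (B : set R), measurable B /\
           A = (fun w => Z w 0 i) @^-1` B].

Definition indep_samples (R : realType) (d : measure_display) (T : measurableType d)
  (dX : measure_display) (Xi : measurableType dX) (P : probability T R)
  (H : set (set T)) (xi : nat -> nat -> T -> Xi) (Tmax S : nat) : Prop :=
  forall (J : seq (nat * nat)) (B : nat * nat -> set Xi) (E : set T),
    uniq J -> (forall j, j \in J -> (j.1 <= Tmax)%N /\ (j.2 < S)%N) ->
    (forall j, measurable (B j)) -> H E ->
    P (E `&` \bigcap_(j in [set j | j \in J]) (xi j.1 j.2 @^-1` B j)) =
    (P E * \prod_(j <- J) P (xi j.1 j.2 @^-1` B j))%E.

(* Main.v *)
Require Import Defs.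
From HB Require Import structures.
From mathcomp Require Import all_boot all_order all_algebra.
From mathcomp Require Import all_classical all_reals all_analysis.
From mathcomp Require Import ring lra.
Import Order.TTheory GRing.Theory Num.Theory.
Import numFieldNormedType.Exports.
Local Open Scope classical_set_scope.
Local Open Scope ring_scope.
Set Implicit Arguments. Unset Strict Implicit.

Lemma dotv0r (R : realType) n (u : 'rV[R]_n) : dotv u 0 = 0.
Proof. by rewrite /dotv big1 // => i _; rewrite mxE mulr0. Qed.

Lemma dir_cvg2 (R : realType) (d1 d2 : nat) (H : 'rV[R]_d1 * 'rV[R]_d2 -> R)
  x y gx gy (w : 'rV[R]_d1) (v : 'rV[R]_d2) :
  is_grad2 H (x, y) gx gy ->
  (fun s => (H (x + s *: w, y + s *: v) - H (x, y)) / s) @ 0^'+ --> dotv gx w + dotv gy v.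
Proof.
move=> [dH hd].
have der := @diff_derivable _ _ _ H (x, y) (w, v) dH.
have DE := @deriveE _ _ _ H (x, y) (w, v) dH.
rewrite hd /= in DE.
rewrite -DE.
move: (der); rewrite /derivable => /cvg_ex [l Hl].
have lE : 'D_(w, v) H (x, y) = l by rewrite /derive (cvg_lim _ Hl).
rewrite lE.
have -> : (fun s => (H (x + s *: w, y + s *: v) - H (x, y)) / s) =
   (fun h => h^-1 *: ((H \o shift (x, y)) (h *: (w, v)) - H (x, y))).
  apply/funext => s /=; rewrite mulrC; congr (_ * (H _ - _)).
  by rewrite [RHS]surjective_pairing; congr pair => /=; rewrite addrC.
move=> A /Hl /nbhs_ballP [_ /posnumP[e] xe_A].
by exists e%:num => //= z xe_z /gt_eqF/negbT/xe_A; exact.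
Qed.

Lemma dir_cvg (R : realType) (d1 d2 : nat) (H : 'rV[R]_d1 * 'rV[R]_d2 -> R)
  x y gx gy (v : 'rV[R]_d2) :
  is_grad2 H (x, y) gx gy ->
  (fun s => (H (x, y + s *: v) - H (x, y)) / s) @ 0^'+ --> dotv gy v.
Proof.
move=> [dH hd].
have der := @diff_derivable _ _ _ H (x, y) (0, v) dH.
have DE := @deriveE _ _ _ H (x, y) (0, v) dH.
rewrite hd /= in DE.
have -> : dotv gy v = 'D_(0, v) H (x, y).
  rewrite DE; suff -> : dotv gx 0 = 0 by rewrite add0r.
  by rewrite /dotv big1 // => i _; rewrite mxE mulr0.
move: (der); rewrite /derivable => /cvg_ex [l Hl].
have lE : 'D_(0, v) H (x, y) = l by rewrite /derive (cvg_lim _ Hl).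
rewrite lE.
have -> : (fun s => (H (x, y + s *: v) - H (x, y)) / s) =
   (fun h => h^-1 *: ((H \o shift (x, y)) (h *: (0, v)) - H (x, y))).
  apply/funext => s /=; rewrite mulrC; congr (_ * (H _ - _)).
  rewrite [RHS]surjective_pairing; congr pair => /=.
    by rewrite scaler0 add0r.
  by rewrite addrC.
move=> A /Hl /nbhs_ballP [_ /posnumP[e] xe_A].
by exists e%:num => //= z xe_z /gt_eqF/negbT/xe_A; exact.
Qed.

Lemma dir_lim (R : realType) (d1 d2 : nat) (H : 'rV[R]_d1 * 'rV[R]_d2 -> R)
  x y gx gy (v : 'rV[R]_d2) (c : R) :
  is_grad2 H (x, y) gx gy ->
  (forall s : R, 0 < s <= 1 -> c <= (H (x, y + s *: v) - H (x, y)) / s) ->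
  c <= dotv gy v.
Proof.
move=> [dH hd] Hq.
have der := @diff_derivable _ _ _ H (x, y) (0, v) dH.
have DE := @deriveE _ _ _ H (x, y) (0, v) dH.
rewrite hd /= in DE.
have -> : dotv gy v = 'D_(0, v) H (x, y).
  rewrite DE; suff -> : dotv gx 0 = 0 by rewrite add0r.
  by rewrite /dotv big1 // => i _; rewrite mxE mulr0.
rewrite /derive (cvg_at_rightE _ _ der).
apply: limr_ge.
  move: der; rewrite /derivable => /cvg_ex [l Hl].
  apply/cvg_ex; exists l.
  move=> A /Hl /nbhs_ballP [_ /posnumP[e] xe_A].
  by exists e%:num => //= z xe_z /gt_eqF/negbT/xe_A; exact.
near=> s.
have s0 : 0 < s by near: s; exact: nbhs_right_gt.
have s1 : s <= 1 by near: s; apply: nbhs_right_le; exact: ltr01.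
have := Hq s; rewrite s0 s1 => /(_ isT).
move=> h; apply: le_trans h _; rewrite le_eqVlt; apply/orP; left; apply/eqP.
rewrite mulrC; congr (_ * (H _ - _)).
apply/esym; rewrite [LHS]surjective_pairing; congr pair => /=.
  by rewrite scaler0 add0r.
by rewrite addrC.
Unshelve. all: by end_near.
Qed.

Lemma dir_lim_le (R : realType) (d1 d2 : nat) (H : 'rV[R]_d1 * 'rV[R]_d2 -> R)
  x y gx gy (v : 'rV[R]_d2) (c : R) :
  is_grad2 H (x, y) gx gy ->
  (forall s : R, 0 < s <= 1 -> (H (x, y + s *: v) - H (x, y)) / s <= c) ->
  dotv gy v <= c.
Proof.
move=> [dH hd] Hq.
have der := @diff_derivable _ _ _ H (x, y) (0, v) dH.
have DE := @deriveE _ _ _ H (x, y) (0, v) dH.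
rewrite hd /= in DE.
have -> : dotv gy v = 'D_(0, v) H (x, y).
  rewrite DE; suff -> : dotv gx 0 = 0 by rewrite add0r.
  by rewrite /dotv big1 // => i _; rewrite mxE mulr0.
rewrite /derive (cvg_at_rightE _ _ der).
apply: limr_le.
  move: der; rewrite /derivable => /cvg_ex [l Hl].
  apply/cvg_ex; exists l.
  move=> A /Hl /nbhs_ballP [_ /posnumP[e] xe_A].
  by exists e%:num => //= z xe_z /gt_eqF/negbT/xe_A; exact.
near=> s.
have s0 : 0 < s by near: s; exact: nbhs_right_gt.
have s1 : s <= 1 by near: s; apply: nbhs_right_le; exact: ltr01.
have := Hq s; rewrite s0 s1 => /(_ isT).
move=> h; apply: le_trans h; rewrite le_eqVlt; apply/orP; left; apply/eqP.
rewrite mulrC; congr (_ * (H _ - _)).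
rewrite [LHS]surjective_pairing; congr pair => /=.
  by rewrite scaler0 add0r.
by rewrite addrC.
Unshelve. all: by end_near.
Qed.

Lemma concave_fo (R : realType) (d1 d2 : nat) (H : 'rV[R]_d1 * 'rV[R]_d2 -> R)
  x y gx gy :
  is_grad2 H (x, y) gx gy -> concave_fun (fun y' => H (x, y')) ->
  forall v, H (x, y + v) <= H (x, y) + dotv gy v.
Proof.
move=> HG Hc v; rewrite -lerBlDl.
apply: (dir_lim HG) => s /andP[s0 s1].
rewrite ler_pdivlMr //.
have := Hc y (y + v) s; rewrite (ltW s0) s1 => /(_ isT).
have -> : (1 - s) *: y + s *: (y + v) = y + s *: v.
  by rewrite scalerDr addrA scalerBl scale1r subrK.
move=> h; rewrite mulrC mulrBr; lra.
Qed.

Lemma dotvDl (R : realType) n (u v w : 'rV[R]_n) : dotv (u + v) w = dotv u w + dotv v w.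
Proof. by rewrite /dotv -big_split /=; apply: eq_bigr => i _; rewrite mxE mulrDl. Qed.
Lemma dotvDr (R : realType) n (u v w : 'rV[R]_n) : dotv w (u + v) = dotv w u + dotv w v.
Proof. by rewrite /dotv -big_split /=; apply: eq_bigr => i _; rewrite mxE mulrDr. Qed.
Lemma dotvZl (R : realType) n a (u w : 'rV[R]_n) : dotv (a *: u) w = a * dotv u w.
Proof. by rewrite /dotv mulr_sumr; apply: eq_bigr => i _; rewrite mxE mulrA. Qed.
Lemma dotvZr (R : realType) n a (u w : 'rV[R]_n) : dotv w (a *: u) = a * dotv w u.
Proof. by rewrite /dotv mulr_sumr; apply: eq_bigr => i _; rewrite mxE mulrCA. Qed.
Lemma dotvNl (R : realType) n (u w : 'rV[R]_n) : dotv (- u) w = - dotv u w.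
Proof. by rewrite -scaleN1r dotvZl mulN1r. Qed.
Lemma dotvNr (R : realType) n (u w : 'rV[R]_n) : dotv w (- u) = - dotv w u.
Proof. by rewrite -scaleN1r dotvZr mulN1r. Qed.
Lemma dotvC (R : realType) n (u w : 'rV[R]_n) : dotv u w = dotv w u.
Proof. by rewrite /dotv; apply: eq_bigr => i _; rewrite mulrC. Qed.
Lemma sqn_ge0 (R : realType) n (u : 'rV[R]_n) : 0 <= sqn u.
Proof. by rewrite /sqn /dotv; apply: sumr_ge0 => i _; rewrite -expr2 sqr_ge0. Qed.
Lemma sqn0 (R : realType) n : sqn (0 : 'rV[R]_n) = 0.
Proof. by rewrite /sqn /dotv big1 // => i _; rewrite mxE mul0r. Qed.
Lemma sqnN (R : realType) n (u : 'rV[R]_n) : sqn (- u) = sqn u.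
Proof. by rewrite /sqn dotvNl dotvNr opprK. Qed.
Lemma sqnD (R : realType) n (u v : 'rV[R]_n) :
  sqn (u + v) = sqn u + 2 * dotv u v + sqn v.
Proof. rewrite /sqn !dotvDl !dotvDr (dotvC v u); ring. Qed.
Lemma sqnZ (R : realType) n a (u : 'rV[R]_n) : sqn (a *: u) = a ^+ 2 * sqn u.
Proof. by rewrite /sqn dotvZl dotvZr mulrA expr2. Qed.

Lemma sc_concave (R : realType) n mu (h : 'rV[R]_n -> R) :
  0 < mu -> strongly_concave mu h -> concave_fun h.
Proof.
move=> mu0 Hs y y' a /andP[a0 a1]; have := Hs y y' a; rewrite a0 a1 => /(_ isT).
apply: le_trans; rewrite lerDl; apply: mulr_ge0; last exact: sqn_ge0.
apply: mulr_ge0; last lra; apply: mulr_ge0 => //; apply: divr_ge0; lra.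
Qed.

Section MI.
Context (R : realType) (d : measure_display) (T : measurableType d) (P : probability T R).

Lemma meas_dot n (A : T -> 'rV[R]_n) (w : 'rV[R]_n) :
  (forall i, measurable_fun setT (fun z => A z 0 i)) ->
  measurable_fun setT (fun z => dotv (A z) w).
Proof.
move=> mA; rewrite /dotv; apply: measurable_sum => i.
by apply: measurable_realfun.measurable_funM => //; exact: measurable_cst.
Qed.

Lemma meas_sqn n (A : T -> 'rV[R]_n) :
  (forall i, measurable_fun setT (fun z => A z 0 i)) ->
  measurable_fun setT (fun z => sqn (A z)).
Proof.
move=> mA; rewrite /sqn /dotv; apply: measurable_sum => i.
exact: measurable_realfun.measurable_funM.
Qed.

Lemma meas_coordB n (A B : T -> 'rV[R]_n) :
  (forall i, measurable_fun setT (fun z => A z 0 i)) ->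
  (forall i, measurable_fun setT (fun z => B z 0 i)) ->
  (forall i, measurable_fun setT (fun z => (A z - B z) 0 i)).
Proof.
move=> mA mB i.
rewrite (_ : (fun z => (A z - B z) 0 i) = (fun z => A z 0 i) \- (fun z => B z 0 i)).
  exact: measurable_realfun.measurable_funB.
by apply/funext => z; rewrite !mxE.
Qed.

Lemma meas_coordC n (c : 'rV[R]_n) :
  (forall i, measurable_fun setT (fun z : T => c 0 i)).
Proof. move=> i; exact: measurable_cst. Qed.

Lemma int_bound (X : T -> R) K : measurable_fun setT X -> (forall z, 0 <= X z) ->
  (\int[P]_z (X z)%:E <= K%:E)%E -> P.-integrable setT (fun z => (X z)%:E).
Proof.
move=> mX X0 HK; apply/integrableP; split; first exact/measurable_realfun.measurable_EFinP.
rewrite (eq_integral (fun z => (X z)%:E)); last first.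
  by move=> z _; rewrite abse_EFin ger0_norm.
by apply: (le_lt_trans HK); exact: ltry.
Qed.

Lemma int_cst (b : R) : P.-integrable setT (fun z : T => b%:E).
Proof. exact: (finite_measure_integrable_cst P b measurableT). Qed.

Lemma integral_affine (X : T -> R) a b : P.-integrable setT (fun z => (X z)%:E) ->
  (\int[P]_z (a * X z + b)%:E = a%:E * \int[P]_z (X z)%:E + b%:E)%E.
Proof.
move=> iX.
rewrite (eq_integral (fun z => (EFin \o (fun z => (a * X z)%R)) z + (EFin \o cst b) z)%E); last first.
  by move=> z _; rewrite /= EFinD.
rewrite integralD_EFin //; last exact: int_cst.
  rewrite (eq_integral (fun z => a%:E * (X z)%:E)%E); last by move=> z _; rewrite /= EFinM.
  rewrite integralZl //; congr (_ + _)%E.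
  rewrite (eq_integral (cst b%:E)) // integral_cst //.
  have HP : (b%:E * P setT = b%:E)%E by rewrite probability_setT mule1.
  exact: HP.
rewrite /comp; under eq_fun do rewrite EFinM; exact: integrableZl.
Qed.

Lemma int_real (X : T -> R) : P.-integrable setT (fun z => (X z)%:E) ->
  exists r : R, (\int[P]_z (X z)%:E)%E = r%:E.
Proof.
move=> iX; exists (fine (\int[P]_z (X z)%:E)); rewrite fineK //.
exact: integrable_fin_num.
Qed.
Lemma meas_grad n1 n2 (H : T -> 'rV[R]_n1 * 'rV[R]_n2 -> R) x y
  (gx : T -> 'rV[R]_n1) (gy : T -> 'rV[R]_n2) (w : 'rV[R]_n1) (v : 'rV[R]_n2) :
  (forall z, is_grad2 (H z) (x, y) (gx z) (gy z)) ->
  (forall p, measurable_fun setT (fun z => H z p)) ->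
  measurable_fun setT (fun z => dotv (gx z) w + dotv (gy z) v).
Proof.
move=> HG mH.
apply: (measurable_realfun.measurable_fun_cvg (h := fun n z =>
  (H z (x + harmonic n *: w, y + harmonic n *: v) - H z (x, y)) / harmonic n)).
  move=> n; apply: measurable_realfun.measurable_funM; last exact: measurable_cst.
  exact: measurable_realfun.measurable_funB.
move=> z _; have := dir_cvg2 (w:=w) (v:=v) (HG z); move/cvg_at_rightP; apply; split.
  by move=> n; exact: harmonic_gt0.
exact: cvg_harmonic.
Qed.

Lemma dotv_delta n (u : 'rV[R]_n) (j : 'I_n) : dotv u (delta_mx 0 j) = u 0 j.
Proof.
rewrite /dotv (bigD1 j) //= big1 => [|i /negbTE ij]; rewrite !mxE ?ij ?eqxx /=.
  by rewrite mulr1 addr0.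
by rewrite mulr0.
Qed.

Lemma int_comb2 (U V : T -> R) (u v a b : R) :
  P.-integrable setT (fun w => (U w)%:E) -> (\int[P]_w (U w)%:E = u%:E)%E ->
  P.-integrable setT (fun w => (V w)%:E) -> (\int[P]_w (V w)%:E = v%:E)%E ->
  P.-integrable setT (fun w => (a * U w + b * V w)%:E) /\
  (\int[P]_w (a * U w + b * V w)%:E = (a * u + b * v)%:E)%E.
Proof.
move=> iU hU iV hV.
have iaU : P.-integrable setT (EFin \o (fun w => a * U w)).
  by rewrite /comp; under eq_fun do rewrite EFinM; exact: integrableZl.
have ibV : P.-integrable setT (EFin \o (fun w => b * V w)).
  by rewrite /comp; under eq_fun do rewrite EFinM; exact: integrableZl.
split.
  by under eq_fun do rewrite EFinD; exact: (integrableD measurableT iaU ibV).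
under eq_integral do rewrite EFinD.
rewrite (integralD_EFin measurableT iaU ibV) /comp.
under eq_integral do rewrite EFinM.
rewrite integralZl // hU.
under eq_integral do rewrite EFinM.
by rewrite integralZl // hV -!EFinM -EFinD.
Qed.

Lemma int_sumE (X : nat -> T -> R) (x : nat -> R) n :
  (forall t, (t < n)%N -> P.-integrable setT (fun w => (X t w)%:E) /\
      (\int[P]_w (X t w)%:E = (x t)%:E)%E) ->
  P.-integrable setT (fun w => (\sum_(0 <= t < n) X t w)%:E) /\
  (\int[P]_w (\sum_(0 <= t < n) X t w)%:E = (\sum_(0 <= t < n) x t)%:E)%E.
Proof.
elim: n => [|n IH] H.
  split.
    by under eq_fun do rewrite big_geq //; exact: int_cst.
  under eq_integral do rewrite big_geq //.
  rewrite big_geq // integral_cst //.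
  have HP : (0%:E * P setT = 0%:E)%E by rewrite mul0e.
  exact: HP.
have [iS hS] := IH (fun t ht => H t (ltnW ht)).
have [iX hX] := H n (ltnSn n).
have [i1 h1] := int_comb2 1 1 iS hS iX hX.
have E2 : (fun w => (1 * \sum_(0 <= t < n) X t w + 1 * X n w)%:E) =
    (fun w => (\sum_(0 <= t < n) X t w + X n w)%:E).
  by apply/funext => w; rewrite !mul1r.
rewrite E2 !mul1r in i1 h1.
have E : (fun w => (\sum_(0 <= t < n.+1) X t w)%:E) =
    (fun w => (\sum_(0 <= t < n) X t w + X n w)%:E).
  by apply/funext => w; rewrite big_nat_recr.
rewrite E; split => //.
by rewrite h1 big_nat_recr.
Qed.

End MI.

Section Smooth.
Context (R : realType) (d1 d2 : nat) (dX : measure_display) (Xi : measurableType dX)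
  (mu_xi : probability Xi R)
  (F : 'rV[R]_d1 -> 'rV[R]_d2 -> Xi -> R)
  (Gx : 'rV[R]_d1 -> 'rV[R]_d2 -> Xi -> 'rV[R]_d1)
  (Gy : 'rV[R]_d1 -> 'rV[R]_d2 -> Xi -> 'rV[R]_d2)
  (f : 'rV[R]_d1 -> 'rV[R]_d2 -> R)
  (gfx : 'rV[R]_d1 -> 'rV[R]_d2 -> 'rV[R]_d1)
  (gfy : 'rV[R]_d1 -> 'rV[R]_d2 -> 'rV[R]_d2)
  (ell sigma : R)
  (HGF : forall z x y, is_grad2 (fun p => F p.1 p.2 z) (x, y) (Gx x y z) (Gy x y z))
  (HGmeas : forall x y (i : 'I_d1) (j : 'I_d2),
      measurable_fun setT (fun z => Gx x y z 0 i) /\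
      measurable_fun setT (fun z => Gy x y z 0 j))
  (HFint : forall x y, mu_xi.-integrable setT (fun z => (F x y z)%:E))
  (Hf : forall x y, (f x y)%:E = (\int[mu_xi]_z (F x y z)%:E)%E)
  (Hgf : forall x y, is_grad2 (fun p => f p.1 p.2) (x, y) (gfx x y) (gfy x y))
  (Hell : 0 < ell)
  (HA2 : forall x y x' y',
      (\int[mu_xi]_z (sqn (Gx x y z - Gx x' y' z) + sqn (Gy x y z - Gy x' y' z))%:E
        <= (ell ^+ 2 * (sqn (x - x') + sqn (y - y')))%:E)%E)
  (HA3 : forall z x, concave_fun (fun y => F x y z))
  (mu : R) (Hmu : 0 < mu) (HA4 : forall x, strongly_concave mu (f x))
  (HA5 : forall x y,
      (\int[mu_xi]_z (sqn (Gx x y z - gfx x y) + sqn (Gy x y z - gfy x y))%:E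
        <= (sigma ^+ 2)%:E)%E).

Lemma mF x y : measurable_fun setT (F x y).
Proof. exact/measurable_realfun.measurable_EFinP/(measurable_int _ (HFint x y)). Qed.

Lemma mGx x y i : measurable_fun setT (fun z => Gx x y z 0 i).
Proof.
have := meas_grad (delta_mx 0 i) 0 (fun z => HGF z x y) (fun p => mF p.1 p.2).
by apply: eq_measurable_fun => z _; rewrite dotv0r addr0 dotv_delta.
Qed.

Lemma mGy x y i : measurable_fun setT (fun z => Gy x y z 0 i).
Proof.
have := meas_grad 0 (delta_mx 0 i) (fun z => HGF z x y) (fun p => mF p.1 p.2).
by apply: eq_measurable_fun => z _; rewrite dotv0r add0r dotv_delta.
Qed.

Lemma dot_le_sqn n (u v : 'rV[R]_n) : `|dotv u v| <= sqn u + sqn v.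
Proof.
have h1 := sqn_ge0 (u + v); have h2 := sqn_ge0 (u - v).
have h3 := sqn_ge0 u; have h4 := sqn_ge0 v.
rewrite sqnD in h1; rewrite sqnD sqnN dotvNr in h2.
rewrite ler_norml; apply/andP; split; lra.
Qed.

Lemma Hmx x y : measurable_fun setT
   (fun z => sqn (Gx x y z - gfx x y) + sqn (Gy x y z - gfy x y)).
Proof.
apply: measurable_realfun.measurable_funD; apply: meas_sqn; apply: meas_coordB;
  first [exact: mGx | exact: mGy | move=> ?; exact: measurable_cst].
Qed.

Lemma int_var x y : mu_xi.-integrable setT
   (fun z => (sqn (Gx x y z - gfx x y) + sqn (Gy x y z - gfy x y))%:E).
Proof.
apply: (int_bound (K := sigma ^+ 2)) => //; first exact: Hmx.
by move=> z; apply: addr_ge0; exact: sqn_ge0.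
Qed.

Lemma int_lip x y x' y' : mu_xi.-integrable setT
   (fun z => (sqn (Gx x y z - Gx x' y' z) + sqn (Gy x y z - Gy x' y' z))%:E).
Proof.
apply: (int_bound (K := ell ^+ 2 * (sqn (x - x') + sqn (y - y')))) => //.
  apply: measurable_realfun.measurable_funD; apply: meas_sqn; apply: meas_coordB;
  first [exact: mGx | exact: mGy | move=> ?; exact: measurable_cst].
by move=> z; apply: addr_ge0; exact: sqn_ge0.
Qed.

Lemma int_dot x y v : mu_xi.-integrable setT (fun z => (dotv (Gy x y z) v)%:E).
Proof.
apply: (le_integrable measurableT (g := fun z =>
   ((sqn (Gx x y z - gfx x y) + sqn (Gy x y z - gfy x y)) + (sqn v + `|dotv (gfy x y) v|))%:E)).
- apply/measurable_realfun.measurable_EFinP; apply: meas_dot; exact: mGy.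
- move=> z _; rewrite !abse_EFin lee_fin.
  have h1 := sqn_ge0 (Gx x y z - gfx x y).
  have h2 := sqn_ge0 (Gy x y z - gfy x y).
  have h3 := sqn_ge0 v.
  have h4 := normr_ge0 (dotv (gfy x y) v).
  rewrite [X in _ <= X]ger0_norm; last lra.
  have -> : dotv (Gy x y z) v = dotv (Gy x y z - gfy x y) v + dotv (gfy x y) v.
    by rewrite -dotvDl subrK.
  apply: (le_trans (ler_normD _ _)).
  have := dot_le_sqn (Gy x y z - gfy x y) v; lra.
- under eq_fun do rewrite EFinD.
  exact: (integrableD measurableT (int_var x y) (int_cst mu_xi _)).
Qed.

Lemma grad_le x y v : dotv (gfy x y) v <= fine (\int[mu_xi]_z (dotv (Gy x y z) v)%:E)%E.
Proof.
have [I hI] := int_real (int_dot x y v); rewrite hI /=.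
apply: (dir_lim_le (Hgf x y)) => s /andP[s0 s1] /=.
rewrite ler_pdivrMr // lerBlDr -lee_fin Hf.
apply: (@le_trans _ _ (\int[mu_xi]_z (F x y z + s * dotv (Gy x y z) v)%:E)%E).
  apply: le_integral => //.
    under eq_fun do rewrite EFinD.
    apply: (integrableD measurableT (HFint x y)).
    under eq_fun do rewrite EFinM.
    exact: integrableZl (int_dot x y v).
  move=> z _; rewrite lee_fin.
  have := concave_fo (HGF z x y) (HA3 z x) (s *: v).
  by rewrite /= dotvZr.
under eq_integral do rewrite EFinD.
rewrite integralD_EFin //; last first.
- rewrite /comp; under eq_fun do rewrite EFinM; exact: integrableZl (int_dot x y v).
- exact: HFint.
rewrite /comp -Hf; under eq_integral do rewrite /= EFinM.
rewrite integralZl //; last exact: int_dot.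
by rewrite hI -EFinM -EFinD mulrC addrC.
Qed.

Lemma grad_eq x y v : (dotv (gfy x y) v)%:E = (\int[mu_xi]_z (dotv (Gy x y z) v)%:E)%E.
Proof.
have [I hI] := int_real (int_dot x y v); rewrite hI; congr EFin.
apply/le_anti/andP; split.
  by have := grad_le x y v; rewrite hI.
have := grad_le x y (- v).
rewrite (eq_integral (fun z => ((-1) * dotv (Gy x y z) v + 0)%:E)); last first.
  by move=> z _; rewrite dotvNr mulN1r addr0.
rewrite integral_affine; last exact: int_dot.
rewrite hI /= dotvNr; lra.
Qed.

Lemma pt_bound n (D h : 'rV[R]_n) (qx c : R) : 0 < c -> 0 <= qx ->
  (- c / 2) * (qx + sqn D) + (- (sqn h / c) / 2) <= dotv D h.
Proof.
move=> c0 qx0.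
have := sqn_ge0 (c *: D + h); rewrite sqnD sqnZ dotvZl.
set q := sqn D; set p := dotv D h; set H := sqn h.
have q0 : 0 <= q by exact: sqn_ge0.
move=> hk0.
have hH : H = c * (H / c) by rewrite mulrC divfK // gt_eqF.
rewrite [in X in _ <= X]hH in hk0.
set k := H / c in hk0 *.
have hk' : 0 <= c * (c * q + 2 * p + k).
  by have -> : c * (c * q + 2 * p + k) = c ^+ 2 * q + 2 * (c * p) + c * k by ring.
have -> : - c / 2 * (qx + q) + - k / 2 = - (c * qx) / 2 - (c * q + 2 * p + k) / 2 + p by field.
have hk2 : 0 <= c * q + 2 * p + k by rewrite -(pmulr_rge0 _ c0).
have hcq : 0 <= c * qx by exact: mulr_ge0 (ltW c0) qx0.
lra.
Qed.

Lemma gfy_lip x a b h c : 0 < c ->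
  - (c * (ell ^+ 2 * sqn (a - b)) + sqn h / c) / 2 <= dotv (gfy x a) h - dotv (gfy x b) h.
Proof.
move=> c0.
have [J hJ] := int_real (int_lip x a x b).
have HJ := HA2 x a x b; rewrite hJ lee_fin subrr sqn0 add0r in HJ.
rewrite -lee_fin EFinB !grad_eq -integralB_EFin //; last 2 first.
  exact: int_dot. exact: int_dot.
apply: (@le_trans _ _ (\int[mu_xi]_z ((- c / 2) * (sqn (Gx x a z - Gx x b z) + sqn (Gy x a z - Gy x b z)) + (- (sqn h / c) / 2))%:E)%E).
  rewrite integral_affine; last exact: int_lip.
  rewrite hJ -EFinM -EFinD lee_fin.
  have : - c / 2 * (ell ^+ 2 * sqn (a - b)) <= - c / 2 * J.
    apply: ler_wnM2l => //; lra.
  lra.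
apply: le_integral => //.
- under eq_fun do rewrite EFinD EFinM.
  apply: (integrableD measurableT _ (int_cst mu_xi _)).
  exact: integrableZl (int_lip x a x b).
- exact: (integrableB measurableT (int_dot x a h) (int_dot x b h)).
- move=> z _; rewrite lee_fin -dotvNl -dotvDl.
  apply: pt_bound => //; exact: sqn_ge0.
Qed.

Lemma f_step x y h (s : R) (j : nat) : 0 < s ->
  j%:R * s * dotv (gfy x y) h - ell * sqn h * s ^+ 2 * (j%:R * (j%:R + 1)) / 2
    <= f x (y + (j%:R * s) *: h) - f x y.
Proof.
move=> s0; elim: j => [|j IH].
  rewrite (_ : (0%:R : R) = 0) // !mul0r scale0r addr0 subrr; lra.
set G := dotv (gfy x y) h; set H := sqn h.
set a := y + (j.+1%:R * s) *: h.
set a' := y + (j%:R * s) *: h.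
set t := j.+1%:R * s.
have t0 : 0 < t by rewrite /t mulr_gt0 // ltr0Sn.
have L1 : f x a' <= f x a - s * dotv (gfy x a) h.
  have := concave_fo (Hgf x a) (sc_concave Hmu (HA4 x)) ((- s) *: h).
  rewrite /= dotvZr mulNr.
  have -> : a + (- s) *: h = a'.
    by rewrite /a /a' -addrA -scalerDl -natr1 mulrDl mul1r addrK.
  by [].
have L2 : - (ell * t * H) <= dotv (gfy x a) h - G.
  have := gfy_lip x a y h (c := (ell * t)^-1) _.
  rewrite invr_gt0 mulr_gt0 // => /(_ isT).
  have -> : a - y = t *: h by rewrite /a addrC addKr.
  rewrite sqnZ -/H.
  have -> : (ell * t)^-1 * (ell ^+ 2 * (t ^+ 2 * H)) + H / (ell * t)^-1 = 2 * (ell * t * H).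
    by field; rewrite mulf_neq0 // gt_eqF.
  rewrite -/G; lra.
have L2' : s * (- (ell * t * H)) <= s * (dotv (gfy x a) h - G) by rewrite ler_pM2l.
rewrite -natr1.
have E : t = (j%:R + 1) * s by rewrite /t -natr1.
rewrite E in L2'.
move: IH L1 L2'; rewrite -/G -/H -/a' => IH L1 L2'.
nra.
Qed.

Lemma f_smooth x y h : f x y + dotv (gfy x y) h - ell / 2 * sqn h <= f x (y + h).
Proof.
set G := dotv (gfy x y) h; set H := sqn h.
have H0 : 0 <= H by exact: sqn_ge0.
have key : forall n : nat, f x y + G - ell / 2 * H <= f x (y + h) + ell * H / (2 * n.+1%:R).
  move=> n; have sp : 0 < (n.+1%:R : R)^-1 by rewrite invr_gt0 ltr0Sn.
  have := f_step x y h n.+1 sp.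
  rewrite mulfV ?gt_eqF ?ltr0Sn // scale1r mul1r -/G -/H.
  have -> : ell * H * (n.+1%:R)^-1 ^+ 2 * (n.+1%:R * (n.+1%:R + 1)) / 2 =
     ell / 2 * H + ell * H / (2 * n.+1%:R).
    by field; rewrite ?gt_eqF ?ltr0Sn.
  set eps := ell * H / (2 * n.+1%:R); set q := ell / 2 * H; lra.
apply/ler_addgt0Pr => e e0.
have x0 : 0 <= ell * H / (2 * e).
  by apply: divr_ge0; [apply: mulr_ge0 => //; exact: ltW | apply: mulr_ge0 => //; exact: ltW].
have hN := archi_boundP x0.
set N := Num.Def.archi_bound _ in hN.
apply: (le_trans (key N)); rewrite lerD2l.
have N0 : 0 < N.+1%:R :> R by exact: ltr0Sn.
rewrite ler_pdivrMr ?mulr_gt0 //.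
have : ell * H / (2 * e) <= N.+1%:R.
  apply: (le_trans (ltW hN)); rewrite ler_nat; exact: leqnSn.
rewrite ler_pdivrMr ?mulr_gt0 //; lra.
Qed.

Lemma descent_step x (y u : 'rV[R]_d2) lam :
  lam / 2 * (sqn (- gfy x y) + (1 - ell * lam) * sqn (- u) - sqn (- gfy x y - - u))
   <= f x (y + lam *: u) - f x y.
Proof.
have := f_smooth x y (lam *: u); rewrite dotvZr sqnZ.
rewrite !sqnN opprK sqnD sqnN dotvNl.
set p := dotv (gfy x y) u; set A := sqn (gfy x y); set B := sqn u.
move=> h.
have -> : lam / 2 * (A + (1 - ell * lam) * B - (A + 2 * - p + B)) =
   lam * p - ell / 2 * (lam ^+ 2 * B) by field.
lra.
Qed.

Lemma descent_sum x (ys us : nat -> 'rV[R]_d2) ystar lam m : 0 < lam ->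
  (forall t, ys t.+1 = ys t + lam *: us t) ->
  (forall y, - f x ystar <= - f x y) ->
  \sum_(0 <= t < m.+1) sqn (- gfy x (ys t))
  <= 2 / lam * (- f x (ys 0%N) - - f x ystar)
     + \sum_(0 <= t < m.+1) sqn (- gfy x (ys t) - - us t)
     - (1 - ell * lam) * \sum_(0 <= t < m.+1) sqn (- us t).
Proof.
move=> lam0 Hys Hst.
have tel : forall n, lam / 2 * \sum_(0 <= t < n) (sqn (- gfy x (ys t)) +
     (1 - ell * lam) * sqn (- us t) - sqn (- gfy x (ys t) - - us t))
     <= f x (ys n) - f x (ys 0%N).
  elim=> [|n IH]; first by rewrite big_geq // mulr0 subrr.
  rewrite big_nat_recr //= mulrDr.
  have := descent_step x (ys n) (us n) lam; rewrite -Hys.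
  lra.
have := tel m.+1; have := Hst (ys m.+1).
rewrite !big_split /= sumrN -mulr_sumr.
set SA := \sum_(0 <= t < m.+1) sqn (- gfy x (ys t)).
set SB := \sum_(0 <= t < m.+1) sqn (- us t).
set SC := \sum_(0 <= t < m.+1) sqn (- gfy x (ys t) - - us t).
set D := - f x (ys 0%N) - - f x ystar.
move=> h1 h2.
have h3 : lam / 2 * (SA + (1 - ell * lam) * SB - SC) <= D.
  rewrite /D; lra.
have : SA + (1 - ell * lam) * SB - SC <= 2 / lam * D.
  rewrite -(ler_pM2l (_ : 0 < lam / 2)); last by apply: divr_gt0.
  have -> : lam / 2 * (2 / lam * D) = D by field; rewrite gt_eqF.
  by [].
lra.
Qed.

End Smooth.

Unset Implicit Arguments. Set Strict Implicit.

Theorem lemma9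
  (R : realType) (d1 d2 : nat)
  (* law of xi: a probability measure on the sample space Xi *)
  (dX : measure_display) (Xi : measurableType dX) (mu_xi : probability Xi R)
  (F : 'rV[R]_d1 -> 'rV[R]_d2 -> Xi -> R)
  (Gx : 'rV[R]_d1 -> 'rV[R]_d2 -> Xi -> 'rV[R]_d1)
  (Gy : 'rV[R]_d1 -> 'rV[R]_d2 -> Xi -> 'rV[R]_d2)
  (f : 'rV[R]_d1 -> 'rV[R]_d2 -> R)
  (gfx : 'rV[R]_d1 -> 'rV[R]_d2 -> 'rV[R]_d1)
  (gfy : 'rV[R]_d1 -> 'rV[R]_d2 -> 'rV[R]_d2)
  (ell mu sigma : R)
  (* F(.,.;xi) is differentiable with gradient (G_x, G_y) *)
  (HGF : forall z x y, is_grad2 (fun p => F p.1 p.2 z) (x, y) (Gx x y z) (Gy x y z))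
  (HGmeas : forall x y (i : 'I_d1) (j : 'I_d2),
      measurable_fun setT (fun z => Gx x y z 0 i) /\
      measurable_fun setT (fun z => Gy x y z 0 j))
  (* f = E[F(.,.;xi)] *)
  (HFint : forall x y, mu_xi.-integrable setT (fun z => (F x y z)%:E))
  (Hf : forall x y, (f x y)%:E = (\int[mu_xi]_z (F x y z)%:E)%E)
  (* f is differentiable with gradient (gfx, gfy) *)
  (Hgf : forall x y, is_grad2 (fun p => f p.1 p.2) (x, y) (gfx x y) (gfy x y))
  (* (A2) mean-squared Lipschitz gradients *)
  (Hell : 0 < ell)
  (HA2 : forall x y x' y',
      (\int[mu_xi]_z (sqn (Gx x y z - Gx x' y' z) + sqn (Gy x y z - Gy x' y' z))%:E
        <= (ell ^+ 2 * (sqn (x - x') + sqn (y - y')))%:E)%E)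
  (* (A3) F(x,.;xi) concave *)
  (HA3 : forall z x, concave_fun (fun y => F x y z))
  (* (A4) f(x,.) mu-strongly concave *)
  (Hmu : 0 < mu)
  (HA4 : forall x, strongly_concave mu (f x))
  (* max_y f(., y) bounded below *)
  (Hlow : exists c : R, forall x,
      (c%:E <= ereal_sup [set (f x y)%:E | y in [set: 'rV[R]_d2]])%E)
  (* bounded variance *)
  (HA5 : forall x y,
      (\int[mu_xi]_z (sqn (Gx x y z - gfx x y) + sqn (Gy x y z - gfy x y))%:E
        <= (sigma ^+ 2)%:E)%E)
  (* the underlying probability space and the random inputs of the inner loop *)
  (dO : measure_display) (Omega : measurableType dO) (P : probability Omega R)
  (lam : R) (Hlam : 0 < lam) (S2 m : nat) (HS2 : (0 < S2)%N)
  (xk xk1 vk : Omega -> 'rV[R]_d1) (yk uk : Omega -> 'rV[R]_d2)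
  (xi : nat -> nat -> Omega -> Xi)
  (* each sample xi_{t,i} is a copy of xi ... *)
  (Hxi_meas : forall t i, measurable_fun setT (xi t i))
  (Hxi_law : forall t i (B : set Xi), measurable B ->
      P (xi t i @^-1` B) = mu_xi B)
  (* ... and the samples are mutually independent and independent of
     x_k, y_k, v_k, u_k, x_{k+1} *)
  (Hindep : indep_samples P
      (<<s vec_events xk `|` vec_events yk `|` vec_events vk `|`
           vec_events uk `|` vec_events xk1 >>) xi m.+1 S2)
  (* y~_k^* = argmin_y g(y), where g(y) = - f(x_{k+1}, y) *)
  (ystar : Omega -> 'rV[R]_d2)
  (Hystar : forall w y, - f (xk1 w) (ystar w) <= - f (xk1 w) y) :
  let ys w t := ytil Gx Gy lam S2 (fun t i => xi t i w)
                    (xk w) (yk w) (vk w) (uk w) (xk1 w) t in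
  let uhat w t := - util Gx Gy lam S2 (fun t i => xi t i w)
                      (xk w) (yk w) (vk w) (uk w) (xk1 w) t in
  let g w y := - f (xk1 w) y in
  let gradg w y := - gfy (xk1 w) y in
  (* the expectations involved are finite *)
  (forall t, (t <= m)%N ->
     P.-integrable setT (fun w => (sqn (gradg w (ys w t)))%:E) /\
     P.-integrable setT (fun w => (sqn (gradg w (ys w t) - uhat w t))%:E) /\
     P.-integrable setT (fun w => (sqn (uhat w t))%:E)) ->
  P.-integrable setT (fun w => (g w (ys w 0%N) - g w (ystar w))%:E) ->
  (\sum_(0 <= t < m.+1) Ex P (fun w => sqn (gradg w (ys w t)))
   <= (2 / lam)%:E * Ex P (fun w => g w (ys w 0%N) - g w (ystar w))%R
      + \sum_(0 <= t < m.+1) Ex P (fun w => sqn (gradg w (ys w t) - uhat w t)%R)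
      - (1 - ell * lam)%:E * \sum_(0 <= t < m.+1) Ex P (fun w => sqn (uhat w t)))%E.

Proof.
move=> ys uhat g gradg Hint Hint0.
have Hys : forall w t, ys w t.+1 = ys w t + lam *: util Gx Gy lam S2 (fun t i => xi t i w)
                      (xk w) (yk w) (vk w) (uk w) (xk1 w) t.
  move=> w t; rewrite /ys /ytil /util /=.
  by case: inner_state => [[[? ?] ?] ?].
have det : forall w,
  \sum_(0 <= t < m.+1) sqn (gradg w (ys w t))
  <= 2 / lam * (g w (ys w 0%N) - g w (ystar w))
     + \sum_(0 <= t < m.+1) sqn (gradg w (ys w t) - uhat w t)
     - (1 - ell * lam) * \sum_(0 <= t < m.+1) sqn (uhat w t).
  move=> w.
  have := (descent_sum HGF HFint Hf Hgf Hell HA2 HA3 Hmu HA4 HA5 m Hlam (Hys w) (Hystar w)).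
  by move=> h; exact: h.
pose A t w := sqn (gradg w (ys w t)).
pose B t w := sqn (uhat w t).
pose C t w := sqn (gradg w (ys w t) - uhat w t).
pose GG w := g w (ys w 0%N) - g w (ystar w).
pose a t := fine (Ex P (A t)).
pose b t := fine (Ex P (B t)).
pose c t := fine (Ex P (C t)).
have hA : forall t, (t < m.+1)%N -> P.-integrable setT (fun w => (A t w)%:E) /\
    (\int[P]_w (A t w)%:E = (a t)%:E)%E.
  move=> t ht; have [i1 [i2 i3]] := Hint t ht; split => //.
  by rewrite /a /Ex fineK //; exact: integrable_fin_num.
have hB : forall t, (t < m.+1)%N -> P.-integrable setT (fun w => (B t w)%:E) /\
    (\int[P]_w (B t w)%:E = (b t)%:E)%E.
  move=> t ht; have [i1 [i2 i3]] := Hint t ht; split => //.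
  by rewrite /b /Ex fineK //; exact: integrable_fin_num.
have hC : forall t, (t < m.+1)%N -> P.-integrable setT (fun w => (C t w)%:E) /\
    (\int[P]_w (C t w)%:E = (c t)%:E)%E.
  move=> t ht; have [i1 [i2 i3]] := Hint t ht; split => //.
  by rewrite /c /Ex fineK //; exact: integrable_fin_num.
have [gr hG] := int_real Hint0.
have [iSA hSA] := int_sumE hA.
have [iSB hSB] := int_sumE hB.
have [iSC hSC] := int_sumE hC.
rewrite (eq_big_nat _ _ (F1 := fun t => Ex P (fun w => sqn (gradg w (ys w t)))) (F2 := fun t => (a t)%:E)); last first.
  by move=> t /andP[_ ht]; exact: (hA t ht).2.
rewrite (eq_big_nat _ _ (F1 := fun t => Ex P (fun w => sqn (uhat w t))) (F2 := fun t => (b t)%:E)); last first.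
  by move=> t /andP[_ ht]; exact: (hB t ht).2.
rewrite (eq_big_nat _ _ (F1 := fun t => Ex P (fun w => sqn (gradg w (ys w t) - uhat w t))) (F2 := fun t => (c t)%:E)); last first.
  by move=> t /andP[_ ht]; exact: (hC t ht).2.
rewrite /Ex hG !sumEFin -!EFinM -EFinD lee_fin.
have [i1 h1] := int_comb2 (2 / lam) 1 Hint0 hG iSC hSC.
have [i2 h2] := int_comb2 1 (- (1 - ell * lam)) i1 h1 iSB hSB.
have [i3 h3] := int_comb2 1 (- 1) i2 h2 iSA hSA.
have : (0 <= (1 * (1 * (2 / lam * gr + 1 * \sum_(0 <= t < m.+1) c t)
          + - (1 - ell * lam) * \sum_(0 <= t < m.+1) b t)
          + - 1 * \sum_(0 <= t < m.+1) a t)%:E)%E.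
  rewrite -h3; apply: integral_ge0 => w _; rewrite lee_fin /=.
  have dw : \sum_(0 <= t < m.+1) A t w <= 2 / lam * GG w + \sum_(0 <= t < m.+1) C t w
     - (1 - ell * lam) * \sum_(0 <= t < m.+1) B t w := det w.
  rewrite -/(GG w); lra.
rewrite lee_fin; lra.
Qed.
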